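(* Let $n\geq 3$ and $m\geq 1$. The matching $\mu$ on the face poset of $\Delta_m^{n,2}$ has no critical cells of dimension $4$ or more.
   Context: $\Delta_m^{n,2}=\mathrm{VR}(\{0,\ldots,m\}^n;2)$, where $\{0,\ldots,m\}^n$ carries the Manhattan metric $d(x,y)=\sum_i|x_i-y_i|$ and $\mathrm{VR}(X;r)$ is the complex of finite subsets of diameter $\leq r$. Order the vertices as $v_1\prec\cdots\prec v_N$ ($N=(m+1)^n$) in the anti-lexicographic order ($x\prec y$ iff at the largest index $i$ with $x_i\neq y_i$, $x_i<y_i$). Let $T_0$ be the set of all simplices of $\Delta_m^{n,2}$, including the empty simplex. For $i=1,\ldots,N$ put $S_i=\{\sigma\in T_{i-1}: v_i\notin\sigma,\ \sigma\cup\{v_i\}\in T_{i-1}\}$, $\mu(\sigma)=\sigma\cup\{v_i\}$ for $\sigma\in S_i$, and $T_i=T_{i-1}\setminus(S_i\cup\{\sigma\cup\{v_i\}:\sigma\in S_i\})$. The critical cells of $\mu$ are the simplices in $T_N$; the dimension of a simplex is its cardinality minus one. *)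

(* Defs.v *)
From mathcomp Require Import all_boot.
Set Implicit Arguments. Unset Strict Implicit. Unset Printing Implicit Defensive.

Definition vertex (n m : nat) := {ffun 'I_n -> 'I_m.+1}.

Definition mdist n m (x y : vertex n m) : nat :=
  \sum_(i < n) ((x i - y i) + (y i - x i)).

(* Simplices of VR({0..m}^n; 2): finite subsets (including the empty one)
   of diameter <= 2. *)
Definition is_simplex n m (s : {set vertex n m}) : bool :=
  [forall x in s, forall y in s, mdist x y <= 2].

Definition antilex_lt n m (x y : vertex n m) : bool :=
  [exists i : 'I_n, (x i < y i) && [forall j : 'I_n, (i < j) ==> (x j == y j)]].
Definition antilex_le n m (x y : vertex n m) : bool :=
  (x == y) || antilex_lt x y.

Definition ordered_vertices n m : seq (vertex n m) :=
  sort (@antilex_le n m) (enum (vertex n m)).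

Definition T0 n m : {set {set vertex n m}} := [set s | is_simplex s].

Definition Sset n m (v : vertex n m) (T : {set {set vertex n m}}) :=
  [set s in T | (v \notin s) && (v |: s \in T)].

Definition mstep n m (T : {set {set vertex n m}}) (v : vertex n m) :=
  T :\: (Sset v T :|: [set v |: s | s in Sset v T]).

Definition critical_cells n m : {set {set vertex n m}} :=
  foldl (@mstep n m) (T0 n m) (ordered_vertices n m).

Definition sdim n m (s : {set vertex n m}) : nat := #|s| - 1.

(* Main.v *)
Require Import Defs.
From mathcomp Require Import all_boot zify.

Section S.
Variables n m : nat.
Implicit Types x y z : vertex n m.

Lemma alt_trans {x y z} : antilex_lt x y -> antilex_lt y z -> antilex_lt x z.
Proof.
move=> /existsP[i /andP[xy /forallP Hi]] /existsP[j /andP[yz /forallP Hj]].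
apply/existsP; case: (ltngtP i j) => [ij|ji|eij].
- exists j; apply/andP; split.
    by move: (Hi j); rewrite ij /= => /eqP ->.
  apply/forallP=> k; apply/implyP=> jk.
  move: (Hi k) (Hj k); rewrite jk (ltn_trans ij jk) /= => /eqP -> /eqP ->; done.
- exists i; apply/andP; split.
    by move: (Hj i); rewrite ji /= => /eqP <-.
  apply/forallP=> k; apply/implyP=> ik.
  move: (Hi k) (Hj k); rewrite ik (ltn_trans ji ik) /= => /eqP -> /eqP ->; done.
- have eij' : i = j by apply: val_inj.
  subst j; exists i; rewrite (ltn_trans xy yz) /=.
  apply/forallP=> k; apply/implyP=> ik.
  move: (Hi k) (Hj k); rewrite ik /= => /eqP -> /eqP ->; done.
Qed.

Lemma le_trans : transitive (@antilex_le n m).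
Proof.
move=> y x z; rewrite /antilex_le => /orP[/eqP->//|xy] /orP[/eqP<-|yz].
  by rewrite xy orbT.
by rewrite (alt_trans xy yz) orbT.
Qed.

Lemma le_total : total (@antilex_le n m).
Proof.
move=> x y; rewrite /antilex_le.
case: (eqVneq x y) => [->|ne] /=; first by [].
have [i0 Hi0] : exists i, x i != y i.
  apply/existsP; apply: contraNT ne => /existsPn H; apply/eqP/ffunP=> i.
  by move: (H i); rewrite negbK => /eqP.
case: (@arg_maxnP _ i0 (fun i => x i != y i) (fun i => val i) Hi0) => i Hi Hmax.
have Hab : forall j : 'I_n, i < j -> x j == y j.
  move=> j ij; apply: contraTT ij => H; rewrite -leqNgt; exact: Hmax.
have Habs : forall j : 'I_n, i < j -> y j == x j.
  by move=> j /Hab; rewrite eq_sym.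

case: (ltngtP (x i) (y i)) => [xy|yx|e].
- apply/orP; left; apply/existsP; exists i; rewrite xy /=.
  by apply/forallP=> j; apply/implyP; exact: Hab.
- apply/orP; right; apply/existsP; exists i; rewrite yx /=.
  by apply/forallP=> j; apply/implyP; exact: Habs.
- by move: Hi; rewrite (val_inj e) eqxx.
Qed.
End S.

Section G.
Variables n m : nat.
Implicit Types x y z u w p q : vertex n m.

Definition ad (a b : nat) := (a - b) + (b - a).

Lemma mdistE x y : mdist x y = \sum_(i < n) ad (x i) (y i).
Proof. by []. Qed.

Lemma mdist_sym x y : mdist x y = mdist y x.
Proof. by rewrite !mdistE; apply: eq_bigr => i _; rewrite /ad addnC. Qed.

Lemma term_le (F : 'I_n -> nat) i0 : F i0 <= \sum_i F i.
Proof. by rewrite (bigD1 i0) //= leq_addr. Qed.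

Lemma term2_le (F : 'I_n -> nat) {a b} : a != b -> F a + F b <= \sum_i F i.
Proof.
move=> ab; rewrite (bigD1 a) //= (bigD1 b) /=; last by rewrite eq_sym.
by rewrite addnA leq_addr.
Qed.

Lemma sum_ge2 (F G : 'I_n -> nat) i0 :
  (forall i, G i <= F i) -> G i0 + 2 <= F i0 -> \sum_i G i + 2 <= \sum_i F i.
Proof.
move=> H H0; rewrite (bigD1 i0) //= [X in _ <= X](bigD1 i0) //=.
have L : \sum_(i < n | i != i0) G i <= \sum_(i < n | i != i0) F i by apply: leq_sum => i _; exact: H.
by rewrite addnAC; apply: leq_add H0 L.
Qed.

Lemma between u p w : mdist u p <= 2 -> mdist p w <= 2 -> 3 <= mdist u w ->
  forall i, ad (u i) (p i) + ad (p i) (w i) = ad (u i) (w i).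
Proof.
move=> H1 H2 H3 i0; apply/eqP; apply: contraT => Hne.
have Hge : forall i, ad (u i) (w i) <= ad (u i) (p i) + ad (p i) (w i).
  by move=> i; rewrite /ad; lia.
have H0 : ad (u i0) (w i0) + 2 <= ad (u i0) (p i0) + ad (p i0) (w i0).
  by move: Hne; rewrite /ad; lia.
have := @sum_ge2 (fun i => ad (u i) (p i) + ad (p i) (w i)) (fun i => ad (u i) (w i)) i0 Hge H0.
have E : \sum_(i < n) (ad (u i) (p i) + ad (p i) (w i)) = mdist u p + mdist p w by rewrite big_split.
have E2 : \sum_(i < n) ad (u i) (w i) = mdist u w by [].
rewrite E E2; lia.
Qed.

Section Core.
Variables (u z : vertex n m) (tau : {set vertex n m}).
Hypothesis Hbet : forall p, p \in tau -> forall i, ad (u i) (p i) + ad (p i) (z i) = ad (u i) (z i).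
Hypothesis Hpz : forall p, p \in tau -> mdist p z <= 1.
Hypothesis Hup : forall p, p \in tau -> mdist u p <= 2.

Definition fpick p : option 'I_n := [pick i | p i != z i].

Lemma ad0 {a b : 'I_m.+1} : ad a b = 0 -> a = b.
Proof. move=> H; apply: val_inj => /=; move: H; rewrite /ad; lia. Qed.

Lemma ad_ne {a b : 'I_m.+1} : a != b -> 1 <= ad a b.
Proof. rewrite -val_eqE /ad /=; lia. Qed.

Lemma pick_none {p} : fpick p = None -> p = z.
Proof.
rewrite /fpick; case: pickP => // H _; apply/ffunP => i.
by move: (H i) => /negbFE /eqP.
Qed.

Lemma pick_some {p a} : p \in tau -> p a != z a ->
  (forall i, i != a -> p i = z i) /\ ad (p a) (z a) = 1.
Proof.
move=> Hp Ha; have H1 := Hpz _ Hp; have Ha1 := ad_ne Ha.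
split.
  move=> i ia; apply: ad0.
  have := term2_le (fun i => ad (p i) (z i)) ia; rewrite -mdistE; lia.
have := term_le (fun i => ad (p i) (z i)) a; rewrite -mdistE; lia.
Qed.

Lemma fpick_inj : {in tau &, injective fpick}.
Proof.
move=> p q Hp Hq.
case Ep: (fpick p) => [a|] Eq.
  move: Ep Eq; rewrite /fpick.
  case: pickP => // a' Ha' [<-]; case: pickP => // b Hb [Eb]; subst b.
  have [Hp1 Hp2] := pick_some Hp Ha'; have [Hq1 Hq2] := pick_some Hq Hb.
  apply/ffunP => i; case: (eqVneq i a') => [->|ia]; last by rewrite Hp1 // Hq1.
  apply: val_inj => /=.
  have B1 := Hbet _ Hp a'; have B2 := Hbet _ Hq a'.
  move: Hp2 Hq2 B1 B2; rewrite /ad; lia.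
by rewrite (pick_none Ep) (pick_none (esym Eq)).
Qed.

Lemma core : #|tau| <= 3.
Proof.
case: (set_0Vmem tau) => [->|[p0 Hp0]]; first by rewrite cards0.
set Z := [set i | u i != z i].
have HZ : #|Z| <= mdist u z.
  rewrite -sum1_card big_mkcond /= mdistE; apply: leq_sum => i _.
  rewrite inE; case: ifP => // H; exact: ad_ne.
have HD : mdist u z = mdist u p0 + mdist p0 z.
  by rewrite !mdistE -big_split /=; apply: eq_bigr => i _; rewrite Hbet.
have Himg : forall p, p \in tau -> forall a, fpick p = Some a -> a \in Z.
  move=> p Hp a; rewrite /fpick; case: pickP => // a' Ha' [<-].
  rewrite inE; apply: contraNN Ha' => /eqP E.
  apply/eqP; apply: ad0; have := Hbet _ Hp a'; rewrite E /ad; lia.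
rewrite -(card_in_imset fpick_inj).
have Hup0 := Hup _ Hp0; have Hpz0 := Hpz _ Hp0.
case: (leqP (mdist u z) 2) => HD2.
  have Hs : fpick @: tau \subset None |: [set Some i | i in Z].
    apply/subsetP => _ /imsetP[p Hp ->]; rewrite !inE.
    case E: (fpick p) => [a|] //=.
    by apply/imsetP; exists a => //; exact: Himg E.
  have := subset_leq_card Hs; rewrite cardsU1 card_imset; last by move=> ? ? [].
  move=> H; apply: (leq_trans H); apply: (@leq_add _ _ 1 2); [exact: leq_b1|lia].
have Hs : fpick @: tau \subset [set Some i | i in Z].
  apply/subsetP => _ /imsetP[p Hp ->].
  case E: (fpick p) => [a|].
    by apply/imsetP; exists a => //; exact: Himg E.
  have := Hup _ Hp; rewrite (pick_none E); lia.
have := subset_leq_card Hs; rewrite card_imset; last by move=> ? ? [].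
move=> H; apply: (leq_trans H); apply: (leq_trans HZ); rewrite HD; exact: (@leq_add _ _ 2 1).
Qed.
End Core.

Lemma simP {s : {set vertex n m}} {x y} : is_simplex s -> x \in s -> y \in s -> mdist x y <= 2.
Proof.
move=> /forallP H hx hy; move: (H x); rewrite hx /= => /forallP /(_ y).
by rewrite hy.
Qed.

Lemma geo (sig : {set vertex n m}) u w : is_simplex (u |: sig) -> 5 <= #|sig| ->
  antilex_lt w u -> (forall p, p \in sig -> p != u -> antilex_lt u p) ->
  is_simplex (w |: (sig :\ u)) -> 2 < mdist u w -> False.
Proof.
move=> Hs Hcard Hwu Hlt Hws Huw.
set tau := sig :\ u.
have Hup : forall p, p \in tau -> mdist u p <= 2.
  move=> p; rewrite !inE => /andP[_ Hp]; apply: (simP Hs); rewrite !inE ?eqxx ?Hp ?orbT //.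
have Hpw : forall p, p \in tau -> mdist p w <= 2.
  move=> p Hp; apply: (simP Hws); [by rewrite in_setU1 Hp orbT|exact: setU11].
have Hb : forall p, p \in tau -> forall i, ad (u i) (p i) + ad (p i) (w i) = ad (u i) (w i).
  move=> p Hp; apply: between; [exact: Hup|exact: Hpw|exact: Huw].
move: Hwu => /existsP[ib /andP[wu /forallP Habove]].
have Hpi : forall p, p \in tau -> p ib = u ib.
  move=> p Hp; have := Hp; rewrite !inE => /andP[pu psig].
  move: (Hlt p psig pu) => /existsP[j /andP[upj /forallP Hj]].
  case: (ltngtP j ib) => [jl|lj|e].
  - by move: (Hj ib); rewrite jl /= => /eqP.
  - move: (Habove j); rewrite lj /= => /eqP E.
    have := Hb p Hp j; rewrite E; move: upj; rewrite /ad; lia.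
  - have E : j = ib by apply: val_inj.
    subst j; have := Hb p Hp ib; move: upj wu; rewrite /ad; lia.
set z : vertex n m := [ffun i => if i == ib then u i else w i].
have Hbz : forall p, p \in tau -> forall i, ad (u i) (p i) + ad (p i) (z i) = ad (u i) (z i).
  move=> p Hp i; rewrite /z ffunE; case: (eqVneq i ib) => [->|_]; last exact: Hb.
  by rewrite Hpi // /ad !subnn.
have Hpz : forall p, p \in tau -> mdist p z <= 1.
  move=> p Hp; have := Hpw _ Hp; rewrite !mdistE (bigD1 ib) //= [X in _ -> X <= _](bigD1 ib) //=.
  rewrite /z ffunE eqxx Hpi // /ad subnn.
  have -> : \sum_(i < n | i != ib) ((p i - [ffun i => if i == ib then u i else w i] i) + ([ffun i => if i == ib then u i else w i] i - p i))
          = \sum_(i < n | i != ib) ((p i - w i) + (w i - p i)).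
    by apply: eq_bigr => i /negbTE; rewrite ffunE => ->.
  set S := \sum_(i < n | i != ib) _. move: wu; lia.
have := @core u z tau Hbz Hpz Hup.
move: Hcard; rewrite (cardsD1 u sig) -/tau; case: (u \in sig) => /= H1 H2; by have := leq_trans H1 (leq_add (leqnn _) H2).
Qed.
End G.
Arguments simP {n m s x y}.

Section Dyn.
Variables n m : nat.
Implicit Types (T : {set {set vertex n m}}) (s t : {set vertex n m}) (v x y : vertex n m).

Lemma setU1_in x s : x \in s -> x |: s = s.
Proof. by move=> H; apply/setP => y; rewrite !inE; case: eqP => // ->. Qed.

Lemma simplex_sub s t : s \subset t -> is_simplex t -> is_simplex s.
Proof.
move=> /subsetP st /forallP H; apply/forallP => x; apply/implyP => hx.
move: (H x); rewrite (st _ hx) /= => /forallP H2.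
apply/forallP => y; apply/implyP => hy; move: (H2 y); by rewrite (st _ hy).
Qed.

Lemma mdist_refl x : mdist x x = 0.
Proof. by rewrite mdistE big1 // => i _; rewrite /ad subnn. Qed.

Lemma simplex_ext s u v : is_simplex s -> is_simplex (v |: (s :\ u)) ->
  mdist u v <= 2 -> is_simplex (v |: s).
Proof.
move=> Hs Hv Huv.
have pt : forall y, y \in v |: s -> mdist v y <= 2.
  move=> y; rewrite in_setU1 => /orP[/eqP->|ys]; first by rewrite mdist_refl.
  case: (eqVneq y u) => [->|yu]; first by rewrite mdist_sym.
  apply: (simP Hv); first exact: setU11.
  by rewrite in_setU1 !inE yu ys orbT.
apply/forallP => x; apply/implyP => hx; apply/forallP => y; apply/implyP => hy.
have := hx; rewrite in_setU1 => /orP[/eqP->|xs]; first exact: pt.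
have := hy; rewrite in_setU1 => /orP[/eqP->|ys]; first by rewrite mdist_sym; apply: pt.
exact: (simP Hs).
Qed.

Lemma foldl_sub T l : foldl (@mstep n m) T l \subset T.
Proof.
elim: l T => [|v l IH] T /=; first exact: subxx.
apply: subset_trans (IH _) _; exact: subsetDl.
Qed.

Lemma survive T l s : T \subset T0 n m -> s \in T ->
  (forall v, v \in l -> v |: s \notin T0 n m) -> s \in foldl (@mstep n m) T l.
Proof.
elim: l T => [|v l IH] T HT Hs Hl //=.
apply: IH.
- exact: subset_trans (subsetDl _ _) HT.
- rewrite /mstep inE Hs andbT in_setU negb_or; apply/andP; split.
    rewrite /Sset inE; apply/negP => /andP[_ /andP[_ H]].
    by have := Hl v (mem_head _ _); rewrite (subsetP HT _ H).
  apply/imsetP => -[t _ E].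
  have vs : v \in s by rewrite E setU11.
  by have := Hl v (mem_head _ _); rewrite setU1_in // (subsetP HT _ Hs).
- by move=> x Hx; apply: Hl; rewrite inE Hx orbT.
Qed.

Lemma kill T v s : s \in T -> v \notin s -> v |: s \in T ->
  (s \notin mstep T v) && (v |: s \notin mstep T v).
Proof.
move=> Hs Hv Hvs.
have HS : s \in Sset v T by rewrite /Sset inE Hs Hv Hvs.
by rewrite /mstep !in_setD !in_setU HS imset_f // orbT.
Qed.
End Dyn.

Theorem lemma4p10 (n m : nat) :
  3 <= n -> 1 <= m ->
  forall s : {set vertex n m}, s \in critical_cells n m -> sdim s < 4.
Proof.
move=> _ _ s Hs; rewrite /sdim; case: (leqP 5 #|s|) => Hc; last by lia.
exfalso.
set vs := ordered_vertices n m.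
have Hpair : pairwise (@antilex_le n m) vs.
  by rewrite -(sorted_pairwise (@le_trans n m)) /vs /ordered_vertices; apply: sort_sorted; exact: (@le_total n m).
have Huniq : uniq vs by rewrite sort_uniq enum_uniq.
have Hmem : forall x, x \in vs by move=> x; rewrite mem_sort mem_enum.
have HsT0 : s \in T0 n m by exact: (subsetP (@foldl_sub n m (T0 n m) (ordered_vertices n m))) _ Hs.
have Hss : is_simplex s by move: HsT0; rewrite inE.
set P := fun v : vertex n m => v |: s \in T0 n m.
have Hin : forall x, x \in s -> P x by move=> x hx; rewrite /P setU1_in.
have [x0 Hx0] : exists x, x \in s.
  by apply/set0Pn; rewrite -card_gt0; lia.
have HP : has P vs by apply/hasP; exists x0; [exact: Hmem | exact: Hin].
set k := find P vs.
have Hk : k < size vs by rewrite -has_find.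
set u := nth x0 vs k.
have Pu : P u by exact: nth_find.
set l1 := take k vs; set l2 := drop k.+1 vs.
have Evs : vs = l1 ++ u :: l2 by rewrite /l1 /u /l2 -drop_nth // cat_take_drop.
have Hl1P : forall v, v \in l1 -> ~~ P v.
  move=> v /(nthP x0) [i]; rewrite size_take Hk => Hi <-.
  by rewrite nth_take // before_find.
have Hl1lt : forall v, v \in l1 -> antilex_lt v u.
  move: Hpair Huniq; rewrite Evs pairwise_cat cat_uniq => /and3P[Hr _ _] /and3P[_ Hu _] v Hv.
  have : antilex_le v u by move: Hr => /allrelP /(_ v u Hv (mem_head _ _)).
  rewrite /antilex_le => /orP[/eqP E|//].
  by move: Hu => /hasPn /(_ u (mem_head _ _)); rewrite -E Hv.
have Hult : forall p, p \in s -> p != u -> antilex_lt u p.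
  move=> p Hp pu.
  have : p \in u :: l2.
    have := Hmem p; rewrite Evs mem_cat => /orP[H|//].
    by have := Hl1P p H; rewrite Hin.
  rewrite in_cons (negbTE pu) /= => Hp2.
  move: Hpair; rewrite Evs pairwise_cat pairwise_cons => /and3P[_ _ /andP[/allP H _]].
  move: (H p Hp2); rewrite /antilex_le => /orP[/eqP E|//].
  by move: pu; rewrite E eqxx.
have HuS : is_simplex (u |: s) by move: Pu; rewrite /P inE.
set tau := s :\ u.
have Hsub : s \subset u |: tau.
  by apply/subsetP => x hx; rewrite in_setU1 !inE; case: eqP => //= _; rewrite hx.
have Htau : forall v, v \in l1 -> v |: tau \notin T0 n m.
  move=> v Hv; apply/negP; rewrite inE => Hvt.
  have Hnp := Hl1P v Hv; move: Hnp; rewrite /P inE => /negP; apply.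
  apply: (@simplex_ext n m s u v Hss Hvt).
  rewrite leqNgt; apply/negP => Huv.
  exact: (@geo n m s u v HuS Hc (Hl1lt v Hv) Hult Hvt Huv).
have Hsig : forall v, v \in l1 -> v |: (u |: tau) \notin T0 n m.
  move=> v Hv; apply/negP; rewrite inE => Hvt.
  have Hnp := Hl1P v Hv; move: Hnp; rewrite /P inE => /negP; apply.
  apply: (@simplex_sub n m _ _ _ Hvt).
  apply/subsetP => x; rewrite in_setU1 => /orP[/eqP->|xs]; first exact: setU11.
  by apply: setU1r; exact: (subsetP Hsub).
set T1 := foldl (@mstep n m) (T0 n m) l1.
have Ht1 : tau \in T1.
  apply: (@survive n m (T0 n m) l1 tau (subxx _) _ Htau).
  by rewrite inE; apply: (@simplex_sub n m _ s _ Hss); exact: subsetDl.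
have Hs1 : u |: tau \in T1.
  apply: (@survive n m (T0 n m) l1 (u |: tau) (subxx _) _ Hsig).
  rewrite inE; apply: (@simplex_sub n m _ (u |: s) _ HuS).
  by apply: setUS; exact: subsetDl.
have Hnu : u \notin tau by rewrite setD11.
have /andP[K1 K2] := @kill n m T1 u tau Ht1 Hnu Hs1.
have Hsm : s \in mstep T1 u.
  apply: (subsetP (@foldl_sub n m _ l2)).
  by move: Hs; rewrite /critical_cells -/vs Evs foldl_cat.
case: (boolP (u \in s)) => Hu.
  by move: K2; rewrite /tau (setD1K Hu) Hsm.
have E : tau = s.
  by apply/setP => x; rewrite !inE; case: eqP => // ->; rewrite (negbTE Hu).
by move: K1; rewrite E Hsm.
Qed.
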